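(* Let $\mathcal J$ be an $n\times n$ signed symbolic matrix with negative diagonal entries, and let $G$ be its J-graph. Fix nodes $i\neq j$, designating $i$ as input and $j$ as output, and let $\mathcal J[\hat i,\hat j]$ denote the minor obtained by deleting row $i$ and column $j$. Then: (1) $\mathcal J[\hat i,\hat j]$ is identically zero if and only if $G$ has no path from $i$ to $j$. (2) Suppose $G$ has a path from $i$ to $j$. Then $\mathcal J[\hat i,\hat j]$ has mixed signs if and only if either $G$ has an incoherent feedforward loop from $i$ to $j$, or $G$ has a positive feedback loop and a path from $i$ to $j$ that are vertex-disjoint.
   Context: A signed symbolic matrix is a matrix whose $(k,l)$ entry is either $a_{kl}$, $-a_{kl}$, or $0$, where the $a_{kl}$ are distinct variables; ''negative diagonal'' means the $(k,k)$ entry is $-a_{kk}$ for every $k$. A polynomial in the $a_{kl}$ has mixed signs if, after all cancellations, it has at least one monomial with positive coefficient and at least one with negative coefficient. The J-graph $G$ of $\mathcal J$ is the signed directed graph on nodes $1,\ldots,n$ with a positive (resp. negative) edge from $k$ to $l$ iff the $(l,k)$ entry of $\mathcal J$ is $a_{lk}$ (resp. $-a_{lk}$), and no edge otherwise. A path is a walk with no repeated vertices except possibly first = last, in which case it is a cycle; the sign of a set of edges is the product of their signs. A feedback loop is a cycle of length at least two; it is positive if its sign is positive. A feedforward loop from $i$ to $j$ ($j\ne i$) is a pair of distinct paths $P_1\neq P_2$ both starting at $i$ and ending at $j$; it is incoherent if $P_1$ and $P_2$ have opposite signs. *)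

(* Defs.v *)
From HB Require Import structures.
From mathcomp Require Import all_boot all_order all_algebra.
From mathcomp Require Import mpoly.
Set Implicit Arguments. Unset Strict Implicit. Unset Printing Implicit Defensive.
Import Order.TTheory GRing.Theory Num.Theory.
Local Open Scope ring_scope.

(* A sign pattern on n nodes: S k l in {-1,0,1} is the sign of entry (k,l). *)
Section Defs.
Variable n : nat.
Implicit Types (S : 'I_n -> 'I_n -> int).

Definition symb_var (k l : 'I_n) : {mpoly int[n * n]} := 'X_(mxvec_index k l).

Definition symb_mx S : 'M[{mpoly int[n * n]}]_n :=
  \matrix_(k, l) ((S k l)%:~R * symb_var k l).

(* J-graph: edge from k to l iff entry (l,k) is nonzero; its sign is S l k. *)
Definition jedge S : rel 'I_n := fun k l => S l k != 0.

Definition is_path S (i j : 'I_n) (p : seq 'I_n) : bool :=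
  match p with
  | [::] => false
  | x :: q => [&& x == i, last x q == j, uniq p & path (jedge S) x q]
  end.

Definition path_sign S (p : seq 'I_n) : int :=
  \prod_(e <- zip p (behead p)) S e.2 e.1.

Definition is_feedback_loop S (c : seq 'I_n) : bool :=
  [&& 1 < size c, uniq c & cycle (jedge S) c]%N.

Definition cycle_sign S (c : seq 'I_n) : int :=
  \prod_(e <- zip c (rot 1 c)) S e.2 e.1.

End Defs.

Definition minor_del (m : nat) (S : 'I_m.+1 -> 'I_m.+1 -> int) (i j : 'I_m.+1)
  : {mpoly int[m.+1 * m.+1]} :=
  \det (row' i (col' j (symb_mx S))).

Definition mixed_signs (k : nat) (p : {mpoly int[k]}) : Prop :=
  (exists m1, 0 < p@_m1) /\ (exists m2, p@_m2 < 0).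

(* Main.v *)
Require Import Defs.
From HB Require Import structures.
From mathcomp Require Import all_boot all_order all_algebra.
From mathcomp Require Import mpoly.
From mathcomp Require Import fingroup perm zify.
From Stdlib Require Import Classical.
Set Implicit Arguments. Unset Strict Implicit. Unset Printing Implicit Defensive.
Import Order.TTheory GRing.Theory Num.Theory.

Section Traj.
Variable T : finType.
Implicit Types (f : T -> T) (x y : T).

Lemma map_traject f x n : map f (traject f x n) = traject f (f x) n.
Proof. by elim: n x => //= n IH x; rewrite IH. Qed.

Lemma zip_traj f x n :
  zip (traject f x n.+1) (behead (traject f x n.+1)) =
  map (fun y => (y, f y)) (traject f x n).
Proof.
elim: n x => [|n IH] x //.
have := IH (f x); rewrite /= => <-; by [].
Qed.

Lemma zip_map_self (s : seq T) f : zip s (map f s) = map (fun y => (y, f y)) s.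
Proof. by elim: s => //= a s ->. Qed.

Lemma rot_traj f x n : iter n f x = x -> rot 1 (traject f x n) = map f (traject f x n).
Proof.
case: n => [|n] // H.
by rewrite map_traject [in LHS]trajectS rot1_cons [in RHS]trajectSr -iterSr H.
Qed.

Lemma path_traj (e : rel T) f x n :
  (forall y, y \in traject f x n -> e y (f y)) -> path e x (traject f (f x) n).
Proof.
elim: n x => [|n IH] x H //=.
rewrite H ?inE ?eqxx //= IH // => y Hy; apply: H; by rewrite inE Hy orbT.
Qed.

Lemma cycle_traj (e : rel T) f x n : iter n.+1 f x = x ->
  (forall y, y \in traject f x n.+1 -> e y (f y)) -> path.cycle e (traject f x n.+1).
Proof.
move=> Hit H; rewrite trajectS /=.
have -> : rcons (traject f (f x) n) x = traject f (f x) n.+1.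
  by rewrite trajectSr -iterSr Hit.
exact: path_traj.
Qed.

Lemma traj_next (s : {perm T}) (p : seq T) x0 p' :
  p = x0 :: p' -> uniq p -> (forall y, y \in p -> s y = next p y) ->
  [/\ #|porbit s x0| = size p, traject s x0 (size p) = p & porbit s x0 =i p].
Proof.
move=> Dp Up Hs.
have Hit : forall t, t < size p -> iter t s x0 = nth x0 p t.
  elim=> [|t IH] lt; first by rewrite Dp.
  rewrite iterS IH ?(ltnW lt) // Hs ?mem_nth ?(ltnW lt) //.
  rewrite next_nth mem_nth ?(ltnW lt) // Dp index_uniq -?Dp ?(ltnW lt) //.
  by rewrite Dp.
have Htr : traject s x0 (size p) = p.
  apply: (@eq_from_nth _ x0); rewrite ?size_traject // => k lk.
  by rewrite nth_traject // Hit.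
have Hcl : forall k, iter k s x0 \in p.
  elim=> [|k IH]; first by rewrite Dp inE eqxx.
  by rewrite iterS Hs // mem_next.
have Hpo : porbit s x0 =i p.
  move=> y; apply/porbitP/idP => [[k ->]|yp].
    by rewrite permX Hcl.
  exists (index y p); rewrite permX Hit ?index_mem // nth_index //.
split=> //; rewrite (eq_card Hpo); exact: card_uniqP.
Qed.

End Traj.

Local Open Scope ring_scope.

Section Comb.
Variables (N : nat) (S : 'I_N -> 'I_N -> int) (i j : 'I_N).

Definition Aw (r : {perm 'I_N}) : int := \prod_(l in porbit r i | l != j) S (r l) l.
Definition Hw (r : {perm 'I_N}) : int :=
  \prod_(O in porbits r | O != porbit r i) - \prod_(l in O) S (r l) l.
Definition Pr (r : {perm 'I_N}) := traject r i #|porbit r i|.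

Lemma orbit_last (r : {perm 'I_N}) : r j = i ->
  exists n', #|porbit r i| = n'.+1 /\ iter n' r i = j.
Proof.
move=> rj; have := card_porbit_neq0 r i; case E: #|porbit r i| => [|n'] // _.
exists n'; split=> //; apply: (@perm_inj _ r); rewrite rj -iterS -E.
exact: iter_porbit.
Qed.

Lemma PathA (r : {perm 'I_N}) : r j = i -> path_sign S (Pr r) = Aw r.
Proof.
move=> rj; have [n' [E Hl]] := orbit_last rj.
have U := uniq_traject_porbit r i; rewrite E in U.
rewrite /Pr /path_sign /Aw E zip_traj big_map /=.
rewrite [RHS]big_mkcondr /=.
rewrite [RHS](eq_bigl (fun l => l \in traject r i n'.+1)); last first.
  by move=> l; rewrite porbit_traject E.
rewrite -big_uniq // trajectSr Hl big_rcons /= eqxx mulr1.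
symmetry.
move: U; rewrite trajectSr Hl rcons_uniq => /andP[nj _].
apply: eq_big_seq => l lin; have -> : l != j by apply: contraNneq nj => <-.
by [].
Qed.

Lemma PathIs (r : {perm 'I_N}) : r j = i ->
  (forall l, l != j -> S (r l) l != 0) -> is_path S i j (Pr r).
Proof.
move=> rj Hnz; have [n' [E Hl]] := orbit_last rj.
have U := uniq_traject_porbit r i; rewrite E in U.
rewrite /Pr E; move: U; rewrite trajectS => U /=.
rewrite eqxx last_traject Hl eqxx -[_ && uniq _]/(uniq (i :: traject r (r i) n')) U /=.
apply: path_traj => y yin; rewrite /jedge; apply: Hnz.
move: U; rewrite -trajectS trajectSr Hl rcons_uniq => /andP[nj _].
by apply: contraNneq nj => <-.
Qed.

Lemma CycS (r : {perm 'I_N}) x :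
  cycle_sign S (traject r x #|porbit r x|) = \prod_(l in porbit r x) S (r l) l.
Proof.
rewrite /cycle_sign rot_traj ?iter_porbit // zip_map_self big_map /=.
rewrite big_uniq ?uniq_traject_porbit //.
by apply: eq_bigl => l; rewrite -porbit_traject.
Qed.

Definition cc (r : {perm 'I_N}) : int :=
  if r j == i then (-1) ^+ r * \prod_(l | l != j) S (r l) l else 0.

Lemma GF (r : {perm 'I_N}) : r j = i -> cc r = - ((-1) ^+ N * (Aw r * Hw r)).
Proof.
move=> rj; rewrite /cc rj eqxx.
have -> : (-1) ^+ r = (-1) ^+ N * (-1) ^+ #|porbits r| :> int.
  by rewrite /odd_perm signr_addb card_ord !signr_odd.
rewrite (partition_big (porbit r) (mem (porbits r))) /=; last first.
  by move=> l _; apply: imset_f.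
rewrite -mulrA -prodrN (bigD1 (porbit r i)) /=; last exact: imset_f.
have jin : j \in porbit r i by rewrite porbit_sym; apply/porbitP; exists 1%N; rewrite expg1 rj.
rewrite mulNr mulrN; congr (- (_ * (_ * _))).
  rewrite /Aw; apply: eq_bigl => l; rewrite andbC eq_porbit_mem //.
rewrite /Hw; apply: eq_bigr => O /andP[/imsetP[x _ ->] ne]; congr (- _).
apply: eq_bigl => l; rewrite eq_porbit_mem.
case lin: (l \in porbit r x); rewrite ?andbF ?andbT //.
apply: contraNneq ne => lj.
have e1 : porbit r l = porbit r x by apply/eqP; rewrite eq_porbit_mem.
have e2 : porbit r l = porbit r i by apply/eqP; rewrite eq_porbit_mem lj.
by rewrite -e1 e2.
Qed.

Definition sgnv (x : int) := x \in [:: -1; 0; 1].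

Lemma sgnvM x y : sgnv x -> sgnv y -> sgnv (x * y).
Proof.
by rewrite /sgnv !inE => /or3P[] /eqP-> /or3P[] /eqP->.
Qed.

Lemma sgnv_prod (I : Type) (s : seq I) (P : pred I) (F : I -> int) :
  (forall k, P k -> sgnv (F k)) -> sgnv (\prod_(k <- s | P k) F k).
Proof.
move=> H; apply: (big_ind sgnv) => //; [exact: sgnvM].
Qed.

Lemma sgnv_neq0 x : sgnv x -> x != 0 -> x = 1 \/ x = -1.
Proof. by rewrite /sgnv !inE => /or3P[] /eqP->; auto. Qed.

Lemma single_val (r : {perm 'I_N}) x : r x = x -> S x x = -1 ->
  - \prod_(l in porbit r x) S (r l) l = 1.
Proof.
move=> rx Sx.
have H : porbit r x =i [:: x].
  have [] // := @traj_next _ r [:: x] x [::] erefl erefl.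
  by move=> y; rewrite inE => /eqP ->; rewrite rx /next /= eqxx.
rewrite (eq_bigl (pred1 x)); last first.
  by move=> l; rewrite H inE.
by rewrite big_pred1_eq rx Sx opprK.
Qed.

Lemma porbit_eqP (r : {perm 'I_N}) x y : y \in porbit r x -> porbit r y = porbit r x.
Proof. by move=> H; apply/eqP; rewrite eq_porbit_mem. Qed.

Lemma j_in (r : {perm 'I_N}) : r j = i -> j \in porbit r i.
Proof. by move=> rj; rewrite porbit_sym; apply/porbitP; exists 1%N; rewrite expg1 rj. Qed.

Lemma Hw1 (r : {perm 'I_N}) : r j = i ->
  (forall k, S k k = -1) -> (forall k l, sgnv (S k l)) ->
  (forall l, l != j -> S (r l) l != 0) ->
  ~ (exists c p, [/\ is_feedback_loop S c, cycle_sign S c = 1,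
                     is_path S i j p & [disjoint c & p]]) ->
  Hw r = 1.
Proof.
move=> rj Hd Hs Hnz Hno; rewrite /Hw; apply: big1 => O /andP[/imsetP[x _ ->] ne].
have jx : j \notin porbit r x.
  apply: contraNN ne => jx; rewrite -(porbit_eqP jx) (porbit_eqP (j_in rj)) //.
have [n' En] : exists n', #|porbit r x| = n'.+1.
  by have := card_porbit_neq0 r x; case: #|_| => // n' _; exists n'.
case: n' En => [|n''] En.
  apply: single_val => //; have := iter_porbit r x; by rewrite En.
set c := traject r x n''.+2.
have Hc : forall y, y \in c -> S (r y) y != 0.
  move=> y yc; apply: Hnz; apply: contraNneq jx => <-.
  by rewrite porbit_traject En.
have cyc : is_feedback_loop S c.
  have U := uniq_traject_porbit r x; rewrite En in U.
  rewrite /is_feedback_loop size_traject U; apply/and3P; split => //.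
  apply: cycle_traj; first by rewrite -En iter_porbit.
  by move=> y yc; rewrite /jedge Hc.
have Pp := PathIs rj Hnz.
have dis : [disjoint c & Pr r].
  apply/pred0P => y /=; apply/negbTE/negP => /andP[yc yp].
  have yx : y \in porbit r x by rewrite porbit_traject En.
  have yi : y \in porbit r i by rewrite porbit_traject.
  by move: ne; rewrite -(porbit_eqP yx) (porbit_eqP yi) eqxx.
have cs := CycS r x; rewrite En -/c in cs.
have : sgnv (cycle_sign S c) by rewrite cs; apply: sgnv_prod => k _; apply: Hs.
move=> /sgnv_neq0 [].
- rewrite cs; apply/prodf_neq0 => l lx; apply: Hnz.
  by apply: contraNneq jx => <-.
- by move=> c1; case: Hno; exists c, (Pr r); split.
- by rewrite -cs => ->; rewrite opprK.
Qed.

Section Constr.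
Variables (p c : seq 'I_N).
Hypotheses (Up : uniq p) (Uc : uniq c) (Dcp : [disjoint c & p]).

Definition fpc x := if x \in p then next p x else next c x.

Lemma notin_c_next x : x \notin c -> next c x = x.
Proof. by move=> xc; rewrite next_nth (negbTE xc). Qed.

Lemma fpc_mem x : (fpc x \in p) = (x \in p).
Proof.
rewrite /fpc; case xp: (x \in p); first by rewrite mem_next.
case xc: (x \in c); last by rewrite notin_c_next ?xc ?xp.
by apply: (disjointFr Dcp); rewrite mem_next.
Qed.

Lemma fpc_inj : injective fpc.
Proof.
move=> x y e.
have ex : (x \in p) = (y \in p) by rewrite -fpc_mem e fpc_mem.
move: e; rewrite /fpc ex; case: (y \in p) => e.
  exact: (can_inj (prev_next Up)) e.
exact: (can_inj (prev_next Uc)) e.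
Qed.

Definition rpc := perm fpc_inj.

Lemma rpcE x : rpc x = fpc x.
Proof. by rewrite permE. Qed.

Variable p' : seq 'I_N.
Hypothesis Dp : p = i :: p'.
Hypothesis Lp : last i p' = j.

Lemma rpc_j : rpc j = i.
Proof.
have jp : j \in p by rewrite Dp -Lp mem_last.
rewrite rpcE /fpc jp next_nth jp Dp -Lp index_last -?Dp //.
by rewrite nth_default.
Qed.

Lemma rpc_orb : [/\ #|porbit rpc i| = size p, traject rpc i (size p) = p
   & porbit rpc i =i p].
Proof.
apply: (traj_next Dp Up) => y yp; by rewrite rpcE /fpc yp.
Qed.

Lemma rpc_Pr : Pr rpc = p.
Proof. by case: rpc_orb => E T _; rewrite /Pr E T. Qed.

Lemma rpc_Aw : Aw rpc = path_sign S p.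
Proof. by rewrite -(PathA rpc_j) rpc_Pr. Qed.

Lemma rpc_Hw : (forall k, S k k = -1) ->
  Hw rpc = if c is c0 :: _ then - cycle_sign S c else 1.
Proof.
move=> Hd; have [_ _ Oi] := rpc_orb.
have single : forall x, x \notin p -> x \notin c ->
    - \prod_(l in porbit rpc x) S (rpc l) l = 1.
  move=> x xp xc; apply: single_val => //.
  by rewrite rpcE /fpc (negbTE xp) notin_c_next.
have notp : forall x, porbit rpc x != porbit rpc i -> x \notin p.
  move=> x; apply: contraNN => xp; apply/eqP/porbit_eqP; by rewrite Oi.
rewrite /Hw; case Dc: c => [|c0 c'].
  apply: big1 => O /andP[/imsetP[x _ ->] ne].
  by apply: single; rewrite ?Dc ?notp.
have c0p : c0 \notin p by rewrite (disjointFr Dcp) // Dc mem_head.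
have [Ec Tc Oc] : [/\ #|porbit rpc c0| = size c, traject rpc c0 (size c) = c
   & porbit rpc c0 =i c].
  apply: (traj_next Dc Uc) => y yc.
  by rewrite rpcE /fpc (disjointFr Dcp yc).
have ne0 : porbit rpc c0 != porbit rpc i.
  by apply: contraNneq c0p => e; rewrite -Oi -e porbit_id.
rewrite (bigD1 (porbit rpc c0)) /=; last by rewrite ne0 andbT imset_f.
rewrite [X in _ * X]big1; first by rewrite mulr1 -CycS Ec Tc Dc.
move=> O /andP[/andP[/imsetP[x _ ->] ne] ne'].
apply: single; first by rewrite notp.
apply: contraNN ne' => xc; apply/eqP; apply: porbit_eqP; by rewrite Oc.
Qed.

End Constr.

End Comb.

Section Det.
Variables (m : nat) (S : 'I_m.+1 -> 'I_m.+1 -> int) (i j : 'I_m.+1).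
Local Notation N := m.+1.
Local Notation P := {mpoly int[m.+1 * m.+1]}.

Definition Bm : 'M[P]_N :=
  \matrix_(k, l) if l == j then (k == i)%:R else symb_mx S k l.

Lemma minorE : minor_del S i j = (-1) ^+ (i + j) * \det Bm.
Proof.
rewrite (expand_det_col Bm j) (bigD1 i) //= big1 ?addr0; last first.
  by move=> k ki; rewrite mxE eqxx (negbTE ki) mul0r.
rewrite mxE !eqxx mul1r /cofactor mulrA -expr2 sqrr_sign mul1r.
rewrite /minor_del; congr (\det _); apply/matrixP => k l.
by rewrite !mxE eq_sym (negbTE (neq_lift j l)).
Qed.

Definition idx (k l : 'I_N) := mxvec_index k l.

Lemma idx_inj k l k' l' : idx k l = idx k' l' -> k = k' /\ l = l'.
Proof. by rewrite /idx /mxvec_index => /cast_ord_inj /enum_rank_inj [-> ->]. Qed.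

Definition mono (r : 'S_N) : 'X_{1..N * N} :=
  (\big[+%MM/0%MM]_(l | l != j) U_(idx (r l) l))%MM.

Definition ccm (r : 'S_N) : int := cc S i j r.

Lemma XP (Q : pred 'I_N) (F : 'I_N -> 'X_{1..N * N}) :
  \prod_(l | Q l) 'X_[F l] = 'X_[\big[+%MM/0%MM]_(l | Q l) F l] :> P.
Proof. by apply/esym/big_morph; [exact: mpolyXD | exact: mpolyX0]. Qed.

Lemma termE (r : 'S_N) :
  (-1) ^+ r * \prod_l Bm (r l) l = 'X_[mono r] *~ ccm r.
Proof.
rewrite (bigD1 j) //= mxE eqxx /ccm /cc.
case: eqP => [rj|rj]; last by rewrite mul0r mulr0 mulr0z.
rewrite mul1r.
rewrite (eq_bigr (fun l => (S (r l) l)%:~R * 'X_[U_(idx (r l) l)])); last first.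
  by move=> l lj; rewrite !mxE (negbTE lj).
rewrite big_split /= XP -rmorph_prod /= -/(mono r) mulrA.
by rewrite -[RHS]mulrzr intrM intr_sign mulrC.
Qed.

Lemma detE : \det Bm = \sum_(r : 'S_N) 'X_[mono r] *~ ccm r.
Proof.
rewrite -det_tr; apply: eq_bigr => r _; rewrite -termE; congr (_ * _).
by apply: eq_bigr => l _; rewrite mxE.
Qed.

Lemma coefB mm : (\det Bm)@_mm = \sum_(r : 'S_N) ccm r * (mono r == mm)%:R.
Proof.
rewrite detE (big_morph (mcoeff mm) (@mcoeffD _ _ mm) (@mcoeff0 _ _ mm)).
apply: eq_bigr => r _.
by rewrite -scaler_int intz mcoeffZ mcoeffX.
Qed.

Lemma mono_inj (r r' : 'S_N) : r j = i -> r' j = i -> mono r = mono r' -> r = r'.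
Proof.
move=> rj r'j E; apply/permP => l.
case: (eqVneq l j) => [->|lj]; first by rewrite rj r'j.
have : (mono r) (idx (r l) l) != 0%N.
  by rewrite /mono mnm_sumE (bigD1 l) //= mnm1E eqxx.
rewrite E /mono mnm_sumE; apply: contraNeq => ne; apply/eqP.
apply: big1 => l' l'j; rewrite mnm1E.
case: eqP => // /idx_inj [e1 e2]; subst l'.
by move: ne; rewrite e1 eqxx.
Qed.

Lemma ccm_j (r : 'S_N) : ccm r != 0 -> r j = i.
Proof. by rewrite /ccm /cc; case: (r j =P i) => [//|_]; rewrite eqxx. Qed.

Lemma coefB_mono (r : 'S_N) : r j = i -> (\det Bm)@_(mono r) = ccm r.
Proof.
move=> rj; rewrite coefB (bigD1 r) //= eqxx mulr1 big1 ?addr0 // => r' ne.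
case: (eqVneq (ccm r') 0) => [->|nz]; first by rewrite mul0r.
case: eqP => [e|_]; last by rewrite mulr0.
by move: ne; rewrite (mono_inj (ccm_j nz) rj e) eqxx.
Qed.

End Det.

Lemma minor_pm (m : nat) (S : 'I_m.+1 -> 'I_m.+1 -> int) (i j : 'I_m.+1) :
  minor_del S i j = \det (Bm S i j) \/ minor_del S i j = - \det (Bm S i j).
Proof.
rewrite minorE -signr_odd; case: (odd _); [right; by rewrite expr1 mulN1r | left; by rewrite expr0 mul1r].
Qed.

Lemma sum_pos (I : finType) (F : I -> int) : 0 < \sum_(r : I) F r -> exists r, 0 < F r.
Proof.
move=> H; apply: NNPP => hn; move: H; apply/negP; rewrite -leNgt.
apply: (@le_trans _ _ (\sum_(r : I) (0 : int))); last by rewrite big1_eq.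
apply: ler_sum => r _; rewrite leNgt; apply/negP => h; apply: hn; by exists r.
Qed.

Lemma term_pos (F : int) (b : bool) : 0 < F * b%:R -> 0 < F.
Proof. by case: b; rewrite ?mulr1 ?mulr0. Qed.
Lemma term_neg (F : int) (b : bool) : F * b%:R < 0 -> F < 0.
Proof. by case: b; rewrite ?mulr1 ?mulr0. Qed.

Section Main.
Variables (m : nat) (S : 'I_m.+1 -> 'I_m.+1 -> int).
Hypothesis HS : forall k l, S k l \in [:: -1; 0; 1].
Hypothesis Hdiag : forall k, S k k = -1.
Variables (i j : 'I_m.+1).

Local Notation det := (\det (Bm S i j)).

Lemma det0 : det = 0 <-> forall r, ccm S i j r = 0.
Proof.
split=> [H r|H].
  case: (eqVneq (ccm S i j r) 0) => // nz.
  by have := coefB_mono S (ccm_j nz); rewrite H mcoeff0 => /esym/eqP; rewrite (negbTE nz).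
apply/mpolyP => mm; rewrite coefB mcoeff0 big1 // => r _; by rewrite H mul0r.
Qed.

Lemma detmix : mixed_signs det <->
  (exists r, 0 < ccm S i j r) /\ (exists r, ccm S i j r < 0).
Proof.
split=> [[[m1 H1] [m2 H2]]|[[r1 H1] [r2 H2]]].
  rewrite coefB in H1; rewrite coefB in H2; split.
    by have [r /term_pos] := sum_pos H1; exists r.
  have : 0 < \sum_r - (ccm S i j r * (mono j r == m2)%:R).
    by rewrite sumrN oppr_gt0.
  by move=> /sum_pos [r]; rewrite oppr_gt0 => /term_neg; exists r.
have e1 : r1 j = i by apply: (@ccm_j _ S); rewrite gt_eqF.
have e2 : r2 j = i by apply: (@ccm_j _ S); rewrite lt_eqF.
by split; [exists (mono j r1) | exists (mono j r2)]; rewrite coefB_mono.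
Qed.

Let K : int := (-1) ^+ m.+1.

Lemma path_dec p : is_path S i j p -> [/\ uniq p, exists p', p = i :: p' & exists p', p = i :: p' /\ last i p' = j].
Proof.
case: p => // x q /and4P[/eqP -> /eqP L U _]; split => //; [by exists q | by exists q].
Qed.

Lemma ps_nz p : is_path S i j p -> path_sign S p != 0.
Proof.
case: p => // x q /and4P[_ _ _ P]; rewrite /path_sign.
elim: q x P => [|y q IH] x /=; first by rewrite big_nil.
move=> /andP[e P]; rewrite big_cons mulf_neq0 //; exact: IH.
Qed.

Lemma ps_sg p : sgnv (path_sign S p).
Proof. by apply: sgnv_prod => k _; apply: HS. Qed.

Lemma mk0 p : is_path S i j p -> exists r, ccm S i j r = - (K * path_sign S p).
Proof.
move=> Hp; have [Up _ [p' [Dp Lp]]] := path_dec Hp.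
have Uc : uniq ([::] : seq 'I_m.+1) by [].
have Dcp : [disjoint [::] & p] by apply/pred0P.
exists (rpc Up Uc Dcp); rewrite /ccm GF ?(rpc_j Up Uc Dcp Dp Lp) //.
by rewrite (rpc_Aw S Up Uc Dcp Dp Lp) (rpc_Hw Up Uc Dcp Dp Hdiag) mulr1.
Qed.

Lemma mkc p c : is_path S i j p -> is_feedback_loop S c -> cycle_sign S c = 1 ->
  [disjoint c & p] -> exists r, ccm S i j r = K * path_sign S p.
Proof.
move=> Hp /and3P[sc Uc _] cs1 Dcp; have [Up _ [p' [Dp Lp]]] := path_dec Hp.
exists (rpc Up Uc Dcp); rewrite /ccm GF ?(rpc_j Up Uc Dcp Dp Lp) //.
rewrite (rpc_Aw S Up Uc Dcp Dp Lp) (rpc_Hw Up Uc Dcp Dp Hdiag).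
by case: c sc Uc Dcp cs1 => // c0 c' _ _ _ ->; rewrite mulrN1 mulrN opprK.
Qed.

Lemma from_perm (r : 'S_m.+1) : ccm S i j r != 0 ->
  [/\ r j = i, is_path S i j (Pr i r) &
      forall l, l != j -> S (r l) l != 0].
Proof.
move=> nz; have rj := ccm_j nz.
have Hnz : forall l, l != j -> S (r l) l != 0.
  move: nz; rewrite /ccm /cc rj eqxx mulf_eq0 negb_or => /andP[_ /prodf_neq0 H].
  exact: H.
by split => //; apply: PathIs.
Qed.

End Main.

Lemma sign_case (K a b : int) : (K = 1 \/ K = -1) -> (a = 1 \/ a = -1) ->
  (b = 1 \/ b = -1) -> 0 < - (K * (a * 1)) -> - (K * (b * 1)) < 0 -> a = - b.
Proof. by case=> ->; case=> ->; case=> ->. Qed.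

Lemma K_pm (n : nat) : (-1) ^+ n = 1 :> int \/ (-1) ^+ n = -1 :> int.
Proof. by rewrite -signr_odd; case: (odd n); [right|left]. Qed.

Lemma mixN (k : nat) (p : {mpoly int[k]}) : mixed_signs (- p) <-> mixed_signs p.
Proof.
rewrite /mixed_signs; split => [[[a Ha] [b Hb]]|[[a Ha] [b Hb]]];
  split; [exists b|exists a|exists b|exists a];
  move: Ha Hb; rewrite !mcoeffN ?oppr_gt0 ?oppr_lt0 //.
Qed.

Theorem lemma2 (m : nat) (S : 'I_m.+1 -> 'I_m.+1 -> int)
  (HS : forall k l, S k l \in [:: -1; 0; 1])
  (Hdiag : forall k, S k k = -1)
  (i j : 'I_m.+1) (hij : i != j) :
  (minor_del S i j = 0 <-> ~ (exists p, is_path S i j p)) /\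
  ((exists p, is_path S i j p) ->
   (mixed_signs (minor_del S i j) <->
    (exists p1 p2, [/\ is_path S i j p1, is_path S i j p2, p1 != p2
                     & path_sign S p1 = - path_sign S p2])
    \/ (exists c p, [/\ is_feedback_loop S c, cycle_sign S c = 1,
                       is_path S i j p & [disjoint c & p]]))).
Proof.
have Z : minor_del S i j = 0 <-> \det (Bm S i j) = 0.
  case: (minor_pm S i j) => ->; first by []. split => [/eqP|->]; [by rewrite oppr_eq0 => /eqP | by rewrite oppr0].
have M : mixed_signs (minor_del S i j) <-> mixed_signs (\det (Bm S i j)).
  by case: (minor_pm S i j) => ->; rewrite ?mixN.
have opp : forall r1 r2 : 'S_m.+1, ccm S i j r1 != 0 ->
    ccm S i j r2 = - ccm S i j r1 ->
    (exists r, 0 < ccm S i j r) /\ (exists r, ccm S i j r < 0).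
  move=> r1 r2 nz e; case: (ltgtP (ccm S i j r1) 0) => h.
  - by split; [exists r2; rewrite e oppr_gt0 | exists r1].
  - by split; [exists r1 | exists r2; rewrite e oppr_lt0].
  - by move: nz; rewrite h eqxx.
have Knz : (-1) ^+ m.+1 != 0 :> int by rewrite signr_eq0.
split.
  rewrite Z det0; split.
    move=> H [p Hp]; have [r Hr] := mk0 Hdiag Hp; move: (H r); rewrite Hr.
    by move=> /eqP; rewrite oppr_eq0 mulf_eq0 (negbTE Knz) (negbTE (ps_nz Hp)).
  move=> H r; apply: NNPP => nz; apply: H.
  have [_ Hp _] := from_perm (introN eqP nz); by exists (Pr i r).
move=> _; rewrite M detmix; split.
  move=> [[r1 H1] [r2 H2]].
  case: (classic (exists c p, [/\ is_feedback_loop S c, cycle_sign S c = 1,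
                       is_path S i j p & [disjoint c & p]])) => [Hc|Hc]; [by right|left].
  have [rj1 P1 nz1] := from_perm (negbT (gt_eqF H1)).
  have [rj2 P2 nz2] := from_perm (negbT (lt_eqF H2)).
  have Hw1' := Hw1 rj1 Hdiag HS nz1 Hc.
  have Hw2' := Hw1 rj2 Hdiag HS nz2 Hc.
  move: H1 H2; rewrite /ccm !GF // Hw1' Hw2' -!PathA // => H1 H2.
  have e : path_sign S (Pr i r1) = - path_sign S (Pr i r2).
    apply: (sign_case (K_pm m.+1)) H1 H2; apply: sgnv_neq0; [exact: ps_sg HS _ | exact: ps_nz P1 | exact: ps_sg HS _ | exact: ps_nz P2].
  exists (Pr i r1), (Pr i r2); split => //.
  apply/eqP => E; move: e; rewrite E => /eqP; rewrite -subr_eq0 opprK -mulr2n.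
  by rewrite mulrn_eq0 /= (negbTE (ps_nz P2)).
case=> [[p1 [p2 [P1 P2 ne E]]] | [c [p [Fc cs P D]]]].
  have [r1 e1] := mk0 Hdiag P1; have [r2 e2] := mk0 Hdiag P2.
  apply: (opp r1 r2).
    by rewrite e1 oppr_eq0 mulf_neq0 // (ps_nz P1).
  by rewrite e1 e2 E mulrN opprK.
have [r1 e1] := mk0 Hdiag P; have [r2 e2] := mkc Hdiag P Fc cs D.
apply: (opp r1 r2); first by rewrite e1 oppr_eq0 mulf_neq0 // (ps_nz P).
by rewrite e1 e2 opprK.
Qed.
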